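(* Let $G=(V,E)$ be a connected chordal graph with at least two vertices and let $v\in V$. Then: (1) $v\in\mathrm{core}(G)$ if and only if $v\in V^+$; (2) $v\in\mathrm{anticore}(G)$ if and only if $\gamma(G_v+u)=\gamma(G)+1$; (3) $v\in\mathrm{corona}(G)\setminus\mathrm{core}(G)$ if and only if either $v\in V^-$, or $v\in V^0$ and $\gamma(G_v+u)=\gamma(G)$.
   Context: All graphs are finite, simple and undirected. A graph is chordal if it has no induced cycle of length at least four. $\gamma(G)$ is the domination number; a minimum dominating set (mds) is a dominating set of size $\gamma(G)$. $\mathrm{core}(G)$ is the set of vertices in every mds, $\mathrm{corona}(G)$ the set of vertices in at least one mds, $\mathrm{anticore}(G)=V\setminus\mathrm{corona}(G)$. With $G-v$ denoting $G$ with $v$ deleted: $V^+=\{v:\gamma(G-v)>\gamma(G)\}$, $V^0=\{v:\gamma(G-v)=\gamma(G)\}$, $V^-=\{v:\gamma(G-v)<\gamma(G)\}$. $G_v+u$ is the graph obtained from $G$ by adding a new vertex $u$ and the single edge $uv$. *)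

(* Defs.v *)
(* Simple graphs: symmetric irreflexive relation e on a finType T. *)
From mathcomp Require Import all_boot.
Set Implicit Arguments. Unset Strict Implicit. Unset Printing Implicit Defensive.

Section Graphs.
Variable T : finType.
Implicit Types (e : rel T) (S D : {set T}) (v : T).

Definition dominates e S D : bool :=
  (D \subset S) && [forall x in S, (x \in D) || [exists y in D, e x y]].

(* domination number of G[S]; S itself dominates G[S], so #|S| is a valid initial bound *)
Definition gamma e S : nat :=
  \big[minn/#|S|]_(D : {set T} | dominates e S D) #|D|.

Definition mds e D : bool := dominates e setT D && (#|D| == gamma e setT).

Definition core e : {set T} := [set v | [forall D, mds e D ==> (v \in D)]].
Definition corona e : {set T} := [set v | [exists D, mds e D && (v \in D)]].
Definition anticore e : {set T} := ~: corona e.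

(* gamma(G - v) = gamma of the subgraph induced on V \ {v} *)
Definition gamma_del e v : nat := gamma e [set~ v].
Definition Vplus e : {set T} := [set v | gamma e setT < gamma_del e v].
Definition Vzero e : {set T} := [set v | gamma_del e v == gamma e setT].
Definition Vminus e : {set T} := [set v | gamma_del e v < gamma e setT].

(* G_v + u : new vertex None joined only to Some v *)
Definition pendant_rel e v : rel (option T) := fun a b =>
  match a, b with
  | Some x, Some y => e x y
  | None, Some y => y == v
  | Some x, None => x == v
  | None, None => false
  end.

Definition connected e : Prop := forall x y : T, connect e x y.

(* p (a duplicate-free vertex sequence, read cyclically) is an induced cycle of length >= 4:
   consecutive vertices (including last-first) are adjacent, and no other pair is adjacent *)
Definition induced_cycle e (p : seq T) : Prop :=
  [/\ 4 <= size p, uniq p, cycle e p &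
      forall (x0 : T) i j, i < size p -> j < size p -> e (nth x0 p i) (nth x0 p j) ->
        (j == (i.+1) %% size p) || (i == (j.+1) %% size p)].
End Graphs.

Definition chordal (T : finType) (e : rel T) : Prop := forall p : seq T, ~ induced_cycle e p.

Definition gamma_pendant (T : finType) (e : rel T) (v : T) : nat :=
  gamma (pendant_rel e v) setT.

(* Main.v *)
Require Import Defs.
From mathcomp Require Import all_boot zify.
Set Implicit Arguments. Unset Strict Implicit. Unset Printing Implicit Defensive.

Lemma bigmin_le (I : eqType) (r : seq I) (P : pred I) (F : I -> nat) x0 j :
  j \in r -> P j -> \big[minn/x0]_(i <- r | P i) F i <= F j.
Proof.
elim: r => [//|a r IH]; rewrite inE big_cons => /orP [/eqP <- Pj|jr Pj].
  by rewrite Pj geq_minl.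
case: (P a); last exact: IH.
by rewrite geq_min IH ?orbT.
Qed.

Lemma bigmin_ex (I : eqType) (r : seq I) (P : pred I) (F : I -> nat) x0 :
  \big[minn/x0]_(i <- r | P i) F i = x0 \/
  exists2 j, (j \in r) && P j & \big[minn/x0]_(i <- r | P i) F i = F j.
Proof.
elim: r => [|a r IH]; first by left; rewrite big_nil.
rewrite big_cons; case Pa: (P a); last first.
  case: IH => [->|[j /andP[jr Pj] ->]]; [by left|right; exists j => //].
  by rewrite inE jr orbT.
case: IH => [->|[j /andP[jr Pj] ->]].
  case: (leqP (F a) x0) => h.
    by right; exists a; [rewrite inE eqxx Pa | by []].
  by left; by [].
case: (leqP (F a) (F j)) => h.
  by right; exists a; [rewrite inE eqxx Pa | by []].
by right; exists j; [rewrite inE jr orbT Pj | by []].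
Qed.

Section G.
Variable T : finType.
Variable e : rel T.
Implicit Types (S D : {set T}).

Lemma dom_self (S : {set T}) : dominates e S S.
Proof. by rewrite /dominates subxx; apply/forall_inP => x ->. Qed.

Lemma gamma_le S D : dominates e S D -> gamma e S <= #|D|.
Proof. by move=> h; rewrite /gamma; apply: bigmin_le => //; rewrite mem_index_enum. Qed.

Lemma gamma_ex S : exists2 D, dominates e S D & #|D| = gamma e S.
Proof.
case: (bigmin_ex (index_enum {set T}) (dominates e S) (fun D => #|D|) #|S|).
  by move=> h; exists S; [apply: dom_self| rewrite /gamma h].
by move=> [D /andP[_ hD] h]; exists D => //; rewrite /gamma h.
Qed.

Lemma domP S D : reflect (D \subset S /\ forall x, x \in S -> x \in D \/ exists2 y, y \in D & e x y)
  (dominates e S D).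
Proof.
apply: (iffP andP) => [[h1 /forall_inP h2]|[h1 h2]]; split=> //.
  move=> x /h2 /orP [->|/exists_inP [y yD exy]]; [by left| by right; exists y].
apply/forall_inP => x /h2 [->//|[y yD exy]]; apply/orP; right; apply/exists_inP; by exists y.
Qed.

End G.


Section G2.
Variable T : finType.
Variable e : rel T.
Implicit Types (S D X : {set T}).

Lemma mds_ex : exists D, mds e D.
Proof. by case: (gamma_ex e setT) => D h1 h2; exists D; rewrite /mds h1 h2 eqxx. Qed.

Lemma inE_core v : v \in core e <-> forall D, mds e D -> v \in D.
Proof.
rewrite /core inE; split => [/forallP h D hD|h]; first by move: (h D); rewrite hD.
by apply/forallP => D; apply/implyP; exact: h.
Qed.

Lemma inE_corona v : v \in corona e <-> exists D, mds e D /\ v \in D.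
Proof.
rewrite /corona inE; split => [/existsP [D /andP [h1 h2]]|[D [h1 h2]]]; first by exists D.
by apply/existsP; exists D; rewrite h1 h2.
Qed.

Lemma mds_of X : dominates e setT X -> #|X| <= gamma e setT -> mds e X.
Proof.
move=> h1 h2; rewrite /mds h1 /=; apply/eqP/anti_leq; rewrite h2; exact: gamma_le.
Qed.

Lemma notcore v X : v \in core e -> dominates e setT X -> v \notin X ->
  #|X| <= gamma e setT -> False.
Proof.
move=> /inE_core hc h1 h2 h3; have := hc _ (mds_of h1 h3); by rewrite (negbTE h2).
Qed.

Lemma dom_del v X : dominates e setT X -> v \notin X -> dominates e [set~ v] X.
Proof.
move=> /domP [_ h] hv; apply/domP; split.
  by apply/subsetP => x xX; rewrite !inE; apply: contraNneq hv => <-.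
by move=> x _; apply: h.
Qed.

Lemma Vplus_core v : v \in Vplus e -> v \in core e.
Proof.
rewrite inE => hp; apply/inE_core => D /andP [h1 /eqP h2].
apply/negPn/negP => hv; have := gamma_le (dom_del h1 hv).
by rewrite h2 -/(gamma_del e v) leqNgt hp.
Qed.

Lemma dom_add v X : dominates e [set~ v] X -> dominates e setT (v |: X).
Proof.
move=> /domP [_ h]; apply/domP; split => [|x _]; first exact: subsetT.
case: (eqVneq x v) => [->|xv]; first by left; rewrite setU11.
case: (h x); first by rewrite !inE.
  by move=> hx; left; rewrite setU1r.
by move=> [y yX exy]; right; exists y; rewrite ?setU1r.
Qed.

Lemma Vminus_corona v : v \in Vminus e -> v \in corona e.
Proof.
rewrite inE /gamma_del => hm; case: (gamma_ex e [set~ v]) => X h1 h2.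
apply/inE_corona; exists (v |: X); split; last by rewrite setU11.
apply: mds_of; first exact: dom_add.
by rewrite cardsU1 h2; move: hm; case: (v \in X) => /=; lia.
Qed.

Lemma gp_ub v : gamma_pendant e v <= (gamma e setT).+1.
Proof.
case: (gamma_ex e setT) => D hD <-.
apply: leq_trans (gamma_le (D := None |: (Some @: D)) _) _.
  apply/domP; split => [|x _]; first exact: subsetT.
  case: x => [x|]; last by left; rewrite setU11.
  case/domP: hD => _ /(_ x (in_setT x)) [hx|[y yD exy]].
    by left; rewrite setU1r // imset_f.
  by right; exists (Some y); rewrite ?setU1r ?imset_f.
by rewrite cardsU1 card_imset //; [case: (_ \in _) | exact: Some_inj].
Qed.

Lemma gp_corona_le v D : dominates e setT D -> v \in D -> gamma_pendant e v <= #|D|.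
Proof.
move=> hD vD; apply: leq_trans (gamma_le (D := Some @: D) _) _; last first.
  by rewrite card_imset //; exact: Some_inj.
apply/domP; split => [|x _]; first exact: subsetT.
case: x => [x|]; last by right; exists (Some v); rewrite ?imset_f //= eqxx.
case/domP: hD => _ /(_ x (in_setT x)) [hx|[y yD exy]].
  by left; rewrite imset_f.
by right; exists (Some y); rewrite ?imset_f.
Qed.

Lemma gp_lb v : exists X, [/\ dominates e setT X, v \in X & #|X| <= gamma_pendant e v].
Proof.
rewrite /gamma_pendant; case: (gamma_ex (pendant_rel e v) setT) => Y hY <-.
set X := [set x | (Some x \in Y) || ((None \in Y) && (x == v))].
have vX : v \in X.
  rewrite inE eqxx andbT; case NY: (None \in Y); first by rewrite orbT.
  case/domP: hY => _ /(_ None (in_setT _)) [|[[y|] yY]] //=; first by rewrite NY.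
  by move=> /eqP <-; rewrite yY.
exists X; split => //.
- apply/domP; split => [|x _]; first exact: subsetT.
  case/domP: hY => _ /(_ (Some x) (in_setT _)) [hx|[[y|] yY] /= hxy].
  + by left; rewrite inE hx.
  + by right; exists y; rewrite // inE yY.
  + by left; rewrite (eqP hxy).
- set Xs := [set x | Some x \in Y].
  have h1 : X \subset v |: Xs.
    apply/subsetP => x; rewrite !inE => /orP [->|/andP [_ ->]]; by rewrite ?orbT.
  have h2 : #|Xs| + (None \in Y) <= #|Y|.
    rewrite (cardsD1 None Y) addnC leq_add2l -(card_imset _ Some_inj).
    apply: subset_leq_card; apply/subsetP => y /imsetP [x]; rewrite !inE => hx ->.
    by rewrite hx.
  apply: leq_trans (subset_leq_card h1) _; rewrite cardsU1.
  move: h2; case NY: (None \in Y).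
    by case: (v \in Xs) => /=; lia.
  case/domP: hY => _ /(_ None (in_setT _)) [|[[y|] yY]] //=; first by rewrite NY.
  by move=> /eqP <-; rewrite inE yY /=; lia.
Qed.

Lemma gp_ge v : gamma e setT <= gamma_pendant e v.
Proof. case: (gp_lb v) => X [h1 _ h3]; exact: leq_trans (gamma_le h1) h3. Qed.

Lemma gp_corona v : gamma_pendant e v = gamma e setT <-> v \in corona e.
Proof.
split => [h|/inE_corona [D [/andP [h1 /eqP h2] vD]]].
  case: (gp_lb v) => X [h1 h2 h3]; apply/inE_corona; exists X; split => //.
  by apply: mds_of; rewrite // -h.
by apply/anti_leq; rewrite gp_ge andbT -h2; apply: gp_corona_le.
Qed.

End G2.


Section Cyc.
Variable T : finType.
Variable e : rel T.
Hypothesis e_sym : symmetric e.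
Hypothesis e_irr : irreflexive e.

Lemma cyc_induced n (f : nat -> T) (w : T) : 3 <= n ->
  (forall i j, i < j -> j < n -> e (f i) (f j) -> j = i.+1) ->
  (forall i, i.+1 < n -> e (f i) (f i.+1)) ->
  (forall i, i < n -> e w (f i) = (i == 0) || (i == n.-1)) ->
  {in gtn n &, injective f} ->
  (forall i, i < n -> f i != w) ->
  induced_cycle e (w :: mkseq f n).
Proof.
move=> n3 hind hedge hw hinj hne.
have nthq x0 i : i < n -> nth x0 (w :: mkseq f n) i.+1 = f i.
  by move=> hi /=; rewrite nth_mkseq.
split.
- by rewrite /= size_mkseq.
- rewrite /= (introT (mkseq_uniqP _ _) hinj) andbT; apply/negP => /mapP [i].
  by rewrite mem_iota => /andP [_ hi] /eqP; rewrite eq_sym (negbTE (hne i hi)).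
- rewrite /cycle rcons_path; apply/andP; split.
    apply/(pathP w) => i; rewrite size_mkseq => hi.
    rewrite (nth_mkseq _ _ hi); case: i hi => [|i] hi /=.
      by rewrite hw // eqxx.
    by rewrite nth_mkseq ?hedge //; lia.
  rewrite (last_nth w) size_mkseq; case: n n3 {nthq hind hedge hw hinj hne} (hw) => [//|m] _ hw' /=.
  rewrite nth_mkseq // e_sym hw' //; by rewrite /= eqxx orbT.
- move=> x0 i j; rewrite /= size_mkseq => hi hj.
  case: i hi => [|i] hi; case: j hj => [|j] hj /=.
  + by rewrite e_irr.
  + rewrite nth_mkseq; last lia.
    rewrite hw; last lia.
    case/orP => /eqP hj'.
      by rewrite hj' (@modn_small 1) ?eqxx //; lia.
    have hn : j.+2 = n.+1 by lia.
    by rewrite hn modnn eqxx orbT.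
  + rewrite nth_mkseq; last lia.
    rewrite e_sym hw; last lia.
    case/orP => /eqP hi'.
      by rewrite hi' (@modn_small 1) ?eqxx ?orbT //; lia.
    have hn : i.+2 = n.+1 by lia.
    by rewrite hn modnn eqxx.
  + rewrite !nth_mkseq; try lia.
    move=> hij; case: (ltngtP i j) => hc.
    * have hji : j = i.+1 by apply: hind => //; lia.
      by rewrite hji (@modn_small i.+2) ?eqxx //; lia.
    * rewrite e_sym in hij; have hji : i = j.+1 by apply: hind => //; lia.
      by rewrite hji (@modn_small j.+2) ?eqxx ?orbT //; lia.
    * by move: hij; rewrite hc e_irr.
Qed.
End Cyc.


Fact Wset_key : unit. Proof. exact: tt. Qed.
Definition Wset (T : finType) (e : rel T) v : {set T} :=
  locked_with Wset_key [set y | (y != v) && ~~ e v y].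
Lemma inWs (T : finType) (e : rel T) v y : (y \in Wset e v) = (y != v) && ~~ e v y.
Proof. by rewrite /Wset locked_withE inE. Qed.
Definition eWrel (T : finType) (e : rel T) v : rel T :=
  fun a b => [&& e a b, a \in Wset e v & b \in Wset e v].

Section Clique.
Variable T : finType.
Variable e : rel T.
Hypothesis e_sym : symmetric e.
Hypothesis e_irr : irreflexive e.
Hypothesis e_chordal : chordal e.
Variable v : T.
Local Notation W := (Wset e v).
Variables z x : T.
Hypothesis vz : e v z.
Hypothesis vx : e v x.
Hypothesis zx : z != x.

Definition good k (f : nat -> T) : Prop :=
  [/\ 0 < k, f 0 = z, f k.+1 = x, (forall i, 0 < i <= k -> f i \in W) &
      (forall i, i <= k -> e (f i) (f i.+1))].

Lemma zW : z \notin W. Proof. by rewrite inWs vz andbF. Qed.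
Lemma xW : x \notin W. Proof. by rewrite inWs vx andbF. Qed.

Lemma walk_ex c1 c2 : c1 \in W -> connect (eWrel e v) c1 c2 -> e z c1 -> e x c2 ->
  exists k f, good k f.
Proof.
move=> c1W /connectP [p hp ->] zc1 xc2.
pose f i := if i == 0 then z else if i <= (size p).+1 then nth c1 (c1 :: p) i.-1 else x.
have pW : forall i, i <= size p -> nth c1 (c1 :: p) i \in W.
  case=> [|i] hi //=; move/(pathP c1): hp => /(_ i hi) /and3P [_ _].
  done.
exists (size p).+1, f; split => //.
- by rewrite /f /= ltnn.
- move=> i /andP [h1 h2]; rewrite /f; case: i h1 h2 => [//|i] _ hi /=.
  rewrite hi; apply: pW; lia.
- move=> i hi; rewrite /f; case: i hi => [|i] hi /=.
  + by [].
  + rewrite hi; case: (ltnP i.+1 (size p).+1) => hi2.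
      move/(pathP c1): hp => /(_ i _) /andP [] //.
    have -> : i = size p by lia.
    by rewrite -last_nth e_sym.
Qed.

Lemma shortcut k f i j : good k f -> i.+1 < j -> j <= k.+1 -> e (f i) (f j) ->
  ~~ ((i == 0) && (j == k.+1)) -> good (k - (j - i.+1)) (fun m => if m <= i then f m else f (m + (j - i.+1))).
Proof.
move=> [k0 f0 fk fW fe] hij hjk hf hn.
have hn' : 0 < i \/ j <= k by move: hn; case: i {hij hf} => [|i]; [rewrite eqxx /=; lia| lia].
split.
- lia.
- by [].
- rewrite ifF; last lia.
  by rewrite -fk; congr f; lia.
- move=> m hm; case: ifP => hmi; apply: fW; lia.
- move=> m hm /=; case: (ltngtP m i) => hmi.
  + apply: fe; lia.
  + have -> : (m.+1 + (j - i.+1)) = (m + (j - i.+1)).+1 by lia.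
    apply: fe; lia.
  + subst m; have -> : (i.+1 + (j - i.+1)) = j by lia.
    done.
Qed.

Lemma good_zx k f : good k f -> e z x.
Proof.
elim/ltn_ind: k f => k IH f hg.
case: (boolP [exists i : 'I_k.+2, exists j : 'I_k.+2, (i.+1 < j) && e (f i) (f j)]).
  case/existsP => i /existsP [j /andP [hij hf]].
  case: (boolP ((i == 0 :> nat) && (j == k.+1 :> nat))).
    case/andP => /eqP hi /eqP hj; case: hg => _ f0 fk _ _.
    by move: hf; rewrite hi hj f0 fk.
  move=> hn; apply: (IH _ _ _ (shortcut hg hij _ hf hn)).
    case: hg => k0 _ _ _ _; lia.
  by have := ltn_ord j.
move=> hno; exfalso.
case: hg => k0 f0 fk fW fe.
have hind : forall i j, i < j -> j < k.+2 -> e (f i) (f j) -> j = i.+1.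
  move=> i j hij hj hf; apply/eqP; apply: contraNT hno => hne.
  apply/existsP; exists (Ordinal (ltn_trans hij hj)); apply/existsP; exists (Ordinal hj).
  by rewrite /= hf andbT; lia.
apply: (e_chordal (p := v :: mkseq f k.+2)).
apply: cyc_induced => //.
- move=> i hi; case: (ltngtP i 0) => // hi0; last by rewrite hi0 f0 vz.
  case: (ltngtP i k.+1) => hik.
  + have := fW i; rewrite hi0 /= inWs => /(_ (ltnSE hik)) /andP [_ /negbTE ->].
    by rewrite /=; apply/esym/negbTE; lia.
  + lia.
  + by rewrite hik fk vx.
- have notW : forall i, i < k.+2 -> (f i \in W) = (0 < i <= k).
    move=> i hi; case: (ltngtP i 0) => // hi0; last by rewrite hi0 f0 (negbTE zW).
    case: (ltngtP i k.+1) => hik; first by rewrite fW ?hi0 //; lia.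
    lia.
    by rewrite hik fk (negbTE xW) /=; lia.
  have wlogI : forall i j, i < j -> j < k.+2 -> f i = f j -> False.
    move=> i j hij hj hfe.
    case: (ltngtP j i.+1) => hj1; first lia.
      case: (ltnP j.+1 k.+2) => hj2.
        have := hind i j.+1 _ hj2; rewrite hfe => /(_ _ (fe j _)); lia.
      have hjk : j = k.+1 by lia.
      case: (ltngtP i 0) => // hi0.
        have := notW i; rewrite hfe hjk notW; lia.
      by move: hfe zx; rewrite hi0 hjk f0 fk => ->; rewrite eqxx.
    by move: (fe i); rewrite hfe -hj1 e_irr; lia.
  move=> i j; rewrite !inE => hi hj hfe.
  case: (ltngtP i j) => // hc; exfalso.
    exact: (wlogI i j).
  exact: (wlogI j i).
- move=> i hi; case: (ltngtP i 0) => // hi0; last by rewrite hi0 f0; apply: contraTneq vz => ->; rewrite e_irr.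
  case: (ltngtP i k.+1) => hik; last by rewrite hik fk; apply: contraTneq vx => ->; rewrite e_irr.
    by have := fW i; rewrite hi0 /= inWs => /(_ (ltnSE hik)) /andP [].
  lia.
Qed.

Lemma clique c1 c2 : c1 \in W -> connect (eWrel e v) c1 c2 -> e z c1 -> e x c2 -> e z x.
Proof. by move=> h1 h2 h3 h4; case: (walk_ex h1 h2 h3 h4) => k [f hf]; exact: good_zx hf. Qed.

End Clique.


Section Main.
Variable T : finType.
Variable e : rel T.
Hypothesis e_sym : symmetric e.
Hypothesis e_irr : irreflexive e.
Hypothesis e_conn : connected e.
Hypothesis e_chordal : chordal e.
Hypothesis hT : 1 < #|T|.
Variable v : T.
Local Notation W := (Wset e v).
Local Notation eW := (eWrel e v).
Local Notation comp c := [set y | connect eW c y].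

Lemma eW_sym : symmetric eW.
Proof. move=> a b; rewrite /eWrel e_sym; by case: (a \in _); case: (b \in _); rewrite ?andbF ?andbT. Qed.

Lemma csym a b : connect eW a b = connect eW b a.
Proof. exact: (sym_connect_sym eW_sym). Qed.

Lemma inW y : (y \in W) = (y != v) && ~~ e v y.
Proof. exact: inWs. Qed.

Lemma trich y : [\/ y = v, e v y | y \in W].
Proof.
rewrite inW; case: (eqVneq y v) => [->|yv]; first by constructor 1.
by case: (boolP (e v y)) => h; [constructor 2|constructor 3].
Qed.

Lemma compW c y : c \in W -> connect eW c y -> y \in W.
Proof.
move=> cW /connectP [p hp ->]; elim: p c cW hp => [//|a p IH] c cW /= /andP [h1 h2].
by apply: IH h2; case/and3P: h1.
Qed.

Lemma nbrW c y : c \in W -> e c y -> e v y \/ (connect eW c y /\ y \in W).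
Proof.
move=> cW cy; case: (trich y) => [yv|->|yW]; [|by left|].
  by move: cW; rewrite inW -yv e_sym cy andbF.
by right; split => //; apply: connect1; rewrite /eWrel cy cW yW.
Qed.

Lemma exitN c : c \in W -> exists c' a, [/\ connect eW c c', e v a & e c' a].
Proof.
move=> cW; case/connectP: (e_conn c v) => p; elim: p c cW => [|a p IH] c cW /=.
  by move=> _ cv; move: cW; rewrite inW cv eqxx.
case/andP => ca hp hl; case: (trich a) => [av|va|aW].
- by move: cW; rewrite inW -av e_sym ca andbF.
- by exists c, a; split.
- case: (IH a aW hp hl) => c' [a' [h1 h2 h3]]; exists c', a'; split => //.
  apply: connect_trans h1; apply: connect1; by rewrite /eWrel ca cW aW.
Qed.

Lemma nbr_ex : exists w, e v w.
Proof.
have : exists y, y != v.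
  apply/existsP; rewrite -negb_forall; apply/negP => /forallP h.
  have : #|T| <= 1.
    rewrite -(card1 v); apply: subset_leq_card; apply/subsetP => y _.
    by rewrite inE; exact: h.
  by rewrite leqNgt hT.
case=> y yv; case/connectP: (e_conn v y) => [[|a p]] /=.
  by move=> _ yv'; move: yv; rewrite yv' eqxx.
by case/andP => h _ _; exists a.
Qed.

Hypothesis hcore : v \in core e.

Lemma core_Vplus : v \in Vplus e.
Proof.
rewrite inE ltnNge; apply/negP => hle.
case: (mds_ex e) => D hD0; have vD := (iffLR (inE_core e v)) hcore D hD0.
case/andP: hD0 => hD /eqP hDg.
set A := D :\ v.
have cAD : #|A| = (gamma e setT).-1 by rewrite -hDg (cardsD1 v D) vD.
have AE : forall y, (y \in A) = (y != v) && (y \in D) by move=> y; rewrite !inE.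
clearbody A.
case: (gamma_ex e [set~ v]) => D' hD' hD'g.
rewrite /gamma_del -hD'g in hle.
case/domP: (hD) => _ domD.
case/domP: (hD') => D'sub domD'.
have D'v : forall y, y \in D' -> y != v.
  by move=> y /(subsetP D'sub); rewrite !inE.
have D'N : forall y, y \in D' -> ~~ e v y.
  move=> y yD'; apply/negP => vy; apply: (notcore hcore (X := D')) => //.
  - apply/domP; split; first exact: subsetT.
    move=> x _; case: (eqVneq x v) => [->|xv]; first by right; exists y.
    by apply: domD'; rewrite !inE.
  - by apply/negP => /D'v; rewrite eqxx.
have D'W : forall y, y \in D' -> y \in W.
  by move=> y yD'; rewrite inW D'v ?D'N.
have Av : forall y, y \in A -> y != v by move=> y; rewrite AE => /andP [].
have domA : forall y, y != v -> ~~ e v y -> y \in A \/ exists2 b, b \in A & e y b.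
  move=> y yv nvy; case: (domD y (in_setT _)) => [yD|[b bD yb]].
    by left; rewrite AE yv.
  right; exists b => //; rewrite AE bD andbT; apply: contraNneq nvy => bv.
  by rewrite e_sym -bv.
set K1 := [set c in W | [exists a, exists c', [&& a \in A, e v a, connect eW c c' & e a c']]].
have K1E : forall c, (c \in K1) = (c \in W) && [exists a, exists c', [&& a \in A, e v a, connect eW c c' & e a c']].
  by move=> c; rewrite inE.
clearbody K1.
set K0 := W :\: K1.
have K0E : forall c, (c \in K0) = (c \notin K1) && (c \in W) by move=> c; rewrite !inE.
clearbody K0.
have K1cl : forall c y, c \in W -> connect eW c y -> (y \in K1) = (c \in K1).
  have H : forall c y, c \in W -> connect eW c y -> y \in K1 -> c \in K1.
    move=> c y cW cy; rewrite !K1E => /andP [_ /existsP [a /existsP [c' /and4P [h1 h2 h3 h4]]]].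
    rewrite cW; apply/existsP; exists a; apply/existsP; exists c'.
    by rewrite h1 h2 h4 (connect_trans cy h3).
  move=> c y cW cy; apply/idP/idP; first exact: H.
  by apply: H; [exact: compW cy| rewrite csym].
have K0cl : forall c y, c \in K0 -> connect eW c y -> y \in K0.
  move=> c y; rewrite !K0E => /andP [nc cW] cy.
  by rewrite (K1cl _ _ cW cy) nc (compW cW cy).
have step2 : forall c, c \in K0 -> #|D' :&: comp c| <= #|A :&: comp c|.
  move=> c cK0; have cW : c \in W by move: cK0; rewrite K0E => /andP [].
  have cK1 : c \notin K1 by move: cK0; rewrite K0E => /andP [].
  case: (exitN cW) => c' [x0 [cc' vx0 c'x0]].
  rewrite leqNgt; apply/negP => hlt.
  set E1 := (D' :\: comp c) :|: (A :&: comp c) :|: [set x0].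
  apply: (notcore hcore (X := E1)).
  - apply/domP; split; first exact: subsetT.
    move=> y _; case: (trich y) => [->|vy|yW].
    + by right; exists x0; rewrite // !inE eqxx !orbT.
    + have yv : y != v by apply: contraTneq vy => ->; rewrite e_irr.
      case: (domD' y); first by rewrite !inE.
        by move/D'N; rewrite vy.
      move=> [d dD' yd]; case: (boolP (connect eW c d)) => dc.
        case: (eqVneq y x0) => [->|yx0]; first by left; rewrite !inE eqxx !orbT.
        right; exists x0; first by rewrite !inE eqxx !orbT.
        have hx : e x0 c' by rewrite e_sym.
        have hc : connect eW d c' by apply: connect_trans cc'; rewrite csym.
        exact: (clique e_sym e_irr e_chordal vy vx0 yx0 (D'W _ dD') hc yd hx).
      by right; exists d; rewrite // !inE dc dD'.
    + have yv : y != v by move: yW; rewrite inW => /andP [].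
      have nvy : ~~ e v y by move: yW; rewrite inW => /andP [].
      case: (boolP (connect eW c y)) => yc.
        case: (domA y yv nvy) => [yA|[b bA yb]]; first by left; rewrite !inE yA yc orbT.
        case: (nbrW yW yb) => [vb|[yb' bW]].
          exfalso; move: cK1; rewrite K1E cW /=; move/negP; apply; apply/existsP; exists b.
          by apply/existsP; exists y; rewrite bA vb (e_sym b y) yb yc.
        right; exists b => //; rewrite !inE bA /=; apply/orP; left; apply/orP; right.
        exact: connect_trans yc yb'.
      case: (domD' y); first by rewrite !inE.
        by move=> yD'; left; rewrite !inE yD' (negbTE yc) /=.
      move=> [d dD' yd]; right; exists d => //.
      case: (nbrW yW yd) => [vd|[yd' _]]; first by move: (D'N _ dD'); rewrite vd.
      rewrite !inE dD' andbT; apply/orP; left; apply/orP; left.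
      apply: contra yc => cd; apply: connect_trans cd _; by rewrite csym.
  - rewrite !inE negb_or; apply/andP; split; first apply/negP.
      case/orP => [/andP [_ /D'v]|/andP [/Av]]; by rewrite eqxx.
    by apply: contraTneq vx0 => <-; rewrite e_irr.
  - have h1 : #|E1| <= #|D' :\: comp c| + #|A :&: comp c| + 1.
      rewrite /E1; apply: leq_trans (leq_card_setU _ _) _; rewrite cards1 leq_add2r.
      exact: leq_card_setU.
    have := cardsID (comp c) D'; lia.
have step3 : forall n (X : {set T}), #|X| <= n -> X \subset K0 ->
    (forall c y, c \in X -> connect eW c y -> y \in X) -> #|D' :&: X| <= #|A :&: X|.
  elim=> [|n IH] X hX XK0 Xcl.
    by move: hX; rewrite leqn0 cards_eq0 => /eqP ->; rewrite !setI0 cards0.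
  case: (set_0Vmem X) => [->|[c cX]]; first by rewrite !setI0 cards0.
  set Y := X :\: comp c.
  have cY : comp c \subset X by apply/subsetP => y; rewrite inE; exact: Xcl.
  have Ycl : forall c0 y, c0 \in Y -> connect eW c0 y -> y \in Y.
    move=> c0 y; rewrite !inE => /andP [nc0 c0X] c0y; rewrite (Xcl _ _ c0X c0y) andbT.
    apply: contra nc0 => cy; apply: connect_trans cy _; by rewrite csym.
  have hY : #|Y| <= n.
    have : #|Y| < #|X|.
      apply: proper_card.
      apply/properP; split; first exact: subsetDl.
      by exists c => //; rewrite !inE connect0.
    lia.
  have := IH Y hY (subset_trans (subsetDl _ _) XK0) Ycl.
  have := step2 c (subsetP XK0 c cX).
  have sp : forall B : {set T}, #|B :&: X| = #|B :&: comp c| + #|B :&: Y|.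
    move=> B; rewrite -(cardsID (comp c) (B :&: X)); congr (_ + _).
      by apply: eq_card => y; rewrite !inE; case: (boolP (connect eW c y)) => h //=;
        rewrite ?andbT ?andbF //; case: (y \in B) => //=; rewrite (subsetP cY) // inE.
    by apply: eq_card => y; rewrite !inE; case: (y \in B); case: (y \in X); case: (connect eW c y).
  rewrite !sp; lia.
have D'K0 : #|D' :&: K0| <= #|A :&: K0|.
  apply: (step3 #|K0|) => //; exact: K0cl.
set Fs := (D' :\: K1) :|: (A :\: K0).
have domF : dominates e [set~ v] Fs.
  apply/domP; split.
    apply/subsetP => y; rewrite /Fs ?inE => /orP [/andP [_ /D'v]|/andP [_ /Av]] //.
  move=> y; rewrite !inE => yv; case: (trich y) => [yv'|vy|yW]; first by move: yv; rewrite yv' eqxx.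
  + case: (domD' y); first by rewrite !inE.
      by move/D'N; rewrite vy.
    move=> [d dD' yd]; case: (boolP (d \in K1)) => dK1.
      move: dK1; rewrite K1E => /andP [dW /existsP [a /existsP [c' /and4P [aA va dc' ac']]]].
      have aK0 : a \notin K0 by rewrite K0E inW va !andbF.
      case: (eqVneq y a) => [->|ya]; first by left; rewrite /Fs ?inE aA aK0 orbT.
      right; exists a; first by rewrite /Fs ?inE aA aK0 orbT.
      exact: (clique e_sym e_irr e_chordal vy va ya dW dc' yd ac').
    by right; exists d; rewrite // /Fs ?inE dK1 dD'.
  + have nvy : ~~ e v y by move: yW; rewrite inW => /andP [].
    case: (boolP (y \in K1)) => yK1.
      have yK0 : y \notin K0 by rewrite K0E yK1.
      case: (domA y yv nvy) => [yA|[b bA yb]]; first by left; rewrite /Fs ?inE yA yK0 orbT.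
      right; exists b => //; rewrite /Fs ?inE bA orbC /=.
      case: (nbrW yW yb) => [vb|[yb' bW]]; first by rewrite K0E inW vb !andbF.
      by rewrite K0E (K1cl _ _ yW yb') yK1.
    case: (domD' y); first by rewrite !inE.
      by move=> yD'; left; rewrite yD'.
    move=> [d dD' yd]; right; exists d => //.
    case: (nbrW yW yd) => [vd|[yd' _]]; first by move: (D'N _ dD'); rewrite vd.
    by rewrite /Fs ?inE dD' (K1cl _ _ yW yd') (negbTE yK1).
have hF := gamma_le domF; rewrite -hD'g in hF.
have cF : #|Fs| <= #|D' :\: K1| + #|A :\: K0| := leq_card_setU _ _.
have eD' : #|D' :\: K1| = #|D' :&: K0|.
  apply: eq_card => y; rewrite !inE K0E; case yD': (y \in D'); rewrite ?andbF ?andbT //.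
  by rewrite D'W ?andbT.
have c1 := cardsID K1 D'.
have c2 := cardsID K0 A.
have cA := cAD.
have gpos : 0 < gamma e setT by rewrite -hDg (cardsD1 v D) vD.
have hsmall : #|D'| <= (gamma e setT).-1 by lia.
case: nbr_ex => w vw.
apply: (notcore hcore (X := w |: D')).
- apply/domP; split; first exact: subsetT.
  move=> y _; case: (eqVneq y v) => [->|yv]; first by right; exists w; rewrite ?setU11.
  case: (domD' y); first by rewrite !inE.
    by move=> h; left; rewrite setU1r.
  by move=> [d dD' yd]; right; exists d; rewrite ?setU1r.
- rewrite !inE negb_or; apply/andP; split.
    by apply: contraTneq vw => <-; rewrite e_irr.
  by apply/negP => /D'v; rewrite eqxx.
- rewrite cardsU1; case: (w \in D') => /=; lia.
Qed.

End Main.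


Theorem theorem6 (T : finType) (e : rel T)
  (e_sym : symmetric e) (e_irr : irreflexive e)
  (e_conn : connected e) (e_chordal : chordal e)
  (hT : 1 < #|T|) (v : T) :
  [/\ (v \in core e) <-> (v \in Vplus e),
      (v \in anticore e) <-> (gamma_pendant e v = (gamma e setT).+1) &
      (v \in corona e :\: core e) <->
        ((v \in Vminus e) \/ ((v \in Vzero e) /\ gamma_pendant e v = gamma e setT))].
Proof.
have c1 : (v \in core e) <-> (v \in Vplus e).
  split; [exact: core_Vplus | exact: Vplus_core].
have hlb := gp_ge e v; have hub := gp_ub e v.
have hc := gp_corona e v.
have c2 : (v \in anticore e) <-> (gamma_pendant e v = (gamma e setT).+1).
  rewrite /anticore inE; split.
    move=> /negP hn; apply/eqP; rewrite eqn_leq hub /= ltn_neqAle hlb andbT.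
    by apply/negP => /eqP h; apply: hn; apply/hc; rewrite h.
  move=> h; apply/negP => /hc; rewrite h; lia.
split => //.
rewrite inE; split.
  case/andP => ncore hcor.
  have nVp : v \notin Vplus e by apply: contra ncore => h; apply/c1.
  move: nVp; rewrite !inE -leqNgt leq_eqVlt => /orP [/eqP h|h].
    by right; split; [apply/eqP| apply/hc].
  by left.
move=> h.
have nVp : v \notin Vplus e.
  by case: h => [|[]]; rewrite !inE; [move=> h; rewrite -leqNgt ltnW | move=> /eqP -> _; rewrite ltnn].
apply/andP; split; first by apply: contra nVp => h'; apply/c1.
case: h => [/Vminus_corona //|[_ h]]; exact/hc.
Qed.
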